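(* Let $h>0$, $k\in\mathbb{N}$, $\beta>0$, $f(x)=hx^k$ and $\mathcal{B}(\alpha)=f(\alpha)+\sqrt2\beta\sqrt{1-\alpha^2}$. If $\beta<\beta_c(k,h)$, then every global maximizer $\hat\alpha$ of $\mathcal{B}$ on $(-1,1)$ satisfies $\mathcal{B}''(\hat\alpha)<0$.
   Context: $\beta_c(1,h)=\infty$, $\beta_c(2,h)=\sqrt2h$, and for $k\ge3$, $\beta_c(k,h)=\frac{h}{\sqrt2}\frac{k-1}{k-2}\left(1-\frac{1}{(k-1)^2}\right)^{k/2}$. *)

(* Defs.v *)
From Stdlib Require Import Reals.
From Coquelicot Require Import Coquelicot.
Open Scope R_scope.

Definition f_pow (h : R) (k : nat) (x : R) : R := h * x ^ k.

Definition Bfun (h : R) (k : nat) (beta : R) (a : R) : R :=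
  f_pow h k a + sqrt 2 * beta * sqrt (1 - a ^ 2).

(* Critical temperature beta_c(k,h) as an extended real:
   k = 1 : +oo ; k = 2 : sqrt 2 * h ;
   k >= 3 : h/sqrt 2 * (k-1)/(k-2) * (1 - 1/(k-1)^2)^(k/2).
   (The value at k = 0 is irrelevant: the theorem assumes k >= 1.) *)
Definition beta_c (k : nat) (h : R) : Rbar :=
  match k with
  | 1%nat => p_infty
  | 2%nat => Finite (sqrt 2 * h)
  | _ => Finite (h / sqrt 2 * ((INR k - 1) / (INR k - 2))
                 * Rpower (1 - 1 / (INR k - 1) ^ 2) (INR k / 2))
  end.

Definition is_global_max_on_open_unit (g : R -> R) (a : R) : Prop :=
  -1 < a < 1 /\ forall x, -1 < x < 1 -> g x <= g a.

(* Main.v *)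
Require Import Defs.
From Stdlib Require Import Reals Lra Lia Psatz.
From Coquelicot Require Import Coquelicot.
Open Scope R_scope.
Lemma first_order (f D1 : R -> R) a :
  -1 < a < 1 -> (forall x, -1 < x < 1 -> is_derive f x (D1 x)) ->
  (forall x, -1 < x < 1 -> f x <= f a) -> D1 a = 0.
Proof.
  intros Ha Hd Hm.
  pose proof (proj1 (is_derive_Reals f a (D1 a)) (Hd a Ha)) as H.
  pose (pr := exist _ (D1 a) H : derivable_pt f a).
  pose proof (deriv_maximum f (-1) 1 a pr (proj1 Ha) (proj2 Ha)
    (fun x h1 h2 => Hm x (conj h1 h2))) as E.
  exact E.
Qed.

Lemma second_order (f D1 : R -> R) a L :
  -1 < a < 1 -> (forall x, -1 < x < 1 -> is_derive f x (D1 x)) ->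
  D1 a = 0 -> is_derive D1 a L -> 0 < L ->
  (forall x, -1 < x < 1 -> f x <= f a) -> False.
Proof.
  intros Ha Hd H0 HL Lpos Hm.
  apply is_derive_Reals in HL.
  destruct (HL (L/2) ltac:(lra)) as [d Hdel].
  set (t := Rmin d (1 - a) / 2).
  assert (tpos : 0 < t). { unfold t. apply Rmin_case; destruct d; simpl; lra. }
  assert (tle : t < d /\ t < 1 - a).
  { unfold t. split; [pose proof (Rmin_l d (1-a)) | pose proof (Rmin_r d (1-a))];
    destruct d; simpl in *; lra. }
  assert (pos : forall y, 0 < y <= t -> 0 < D1 (a + y)).
  { intros y Hy. assert (y <> 0) by lra.
    assert (Rabs y < d) by (rewrite Rabs_pos_eq; lra).
    specialize (Hdel y H H1). rewrite H0 in Hdel.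
    apply Rabs_def2 in Hdel. destruct Hdel as [_ Hdel].
    replace ((D1 (a+y) - 0)/y) with (D1 (a+y) / y) in Hdel by (field; lra).
    assert (0 < D1 (a+y)/y) by lra.
    replace (D1 (a+y)) with ((D1 (a+y)/y) * y) by (field; lra). nra. }
  destruct (MVT_cor2 f D1 a (a + t) ltac:(lra)) as [xi [Exi Hxi]].
  { intros x Hx. apply is_derive_Reals. apply Hd. lra. }
  assert (0 < D1 xi). { replace xi with (a + (xi - a)) by ring. apply pos. lra. }
  assert (f (a + t) <= f a) by (apply Hm; lra). nra.
Qed.
Lemma bernoulli n y : -1 <= y -> 1 + INR n * y <= (1 + y) ^ n.
Proof.
  intros Hy. induction n as [|n IH]. simpl; lra. simpl pow. rewrite S_INR.
  assert (0 <= INR n) by apply pos_INR. nra.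
Qed.

Lemma key m : let B := INR m + 2 in let C := INR m + 3 in (C / B) ^ (S m) <= B.
Proof.
  intros B C. assert (0 <= INR m) by apply pos_INR.
  assert (Cp : 1 <= C) by (unfold C; lra).
  assert (Hy : -1 <= -1/C).
  { unfold Rdiv. assert (0 < /C) by (apply Rinv_0_lt_compat; lra).
    assert (C * /C = 1) by (field; lra). nra. }
  pose proof (bernoulli (S m) (-1/C) Hy) as Hb.
  rewrite S_INR in Hb.
  replace (1 + -1/C) with (B/C) in Hb by (unfold B, C; field; lra).
  assert (E : (C/B)^(S m) * (B/C)^(S m) = 1).
  { rewrite <- Rpow_mult_distr. replace (C/B*(B/C)) with 1 by (unfold B,C; field; lra). apply pow1. }
  assert (1 + (INR m + 1) * (-1/C) = 2 / C) by (unfold C; field; lra).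
  assert (0 < 2 / C) by (unfold C; apply Rdiv_lt_0_compat; lra).
  assert (0 <= (C/B)^(S m)) by (apply pow_le; unfold C, B; apply Rlt_le, Rdiv_lt_0_compat; lra).
  assert ((C/B)^(S m) * (2/C) <= 1) by nra.
  assert ((C/B)^(S m) * 2 <= C).
  { apply (Rmult_le_reg_r (/C)). unfold C; apply Rinv_0_lt_compat; lra.
    replace (C * / C) with 1 by (unfold C; field; lra). unfold Rdiv in *. nra. }
  unfold B, C in *. lra.
Qed.
Lemma alg h k beta a s : 0 < h -> (1 <= k)%nat -> 0 < beta ->
  Rbar_lt (Finite beta) (beta_c k h) -> 0 < s -> s * s = 1 - a ^ 2 ->
  h * INR k * a ^ (pred k) - sqrt 2 * beta * a / s = 0 ->
  h * INR k * (INR (pred k) * a ^ (pred (pred k))) - sqrt 2 * beta / (s * s * s) = 0 ->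
  False.
Proof.
  intros hp kp bp Hb sp Hs D1 D2.
  assert (s2 : sqrt 2 * sqrt 2 = 2) by (apply sqrt_sqrt; lra).
  assert (s2p : 0 < sqrt 2) by (apply sqrt_lt_R0; lra).
  set (c := sqrt 2 * beta) in *.
  assert (cp : 0 < c) by (unfold c; nra).
  assert (sss : 0 < s * s * s) by (apply Rmult_lt_0_compat; nra).
  destruct k as [|[|[|m]]]; [lia| | |].
  - simpl in D2. assert (0 < c / (s*s*s)) by (apply Rdiv_lt_0_compat; lra). lra.
  - simpl in Hb. simpl in D1, D2.
    assert (c < 2 * h) by (unfold c; nra).
    assert (Ec : c = 2 * h * (s*s*s)).
    { replace c with ((c / (s*s*s)) * (s*s*s)) by (field; lra). nra. }
    assert (E1 : 2 * h * a * s = c * a).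
    { replace (c * a) with ((c * a / s) * s) by (field; lra). unfold Rdiv in *. nra. }
    rewrite Ec in E1.
    assert (a * (s * (1 - s * s)) = 0) by nra.
    assert (1 - s*s = a * a) by (simpl in Hs; lra).
    assert (a * a * a * s = 0) by (rewrite H1 in H0; lra).  
    assert (a = 0).
    { destruct (Req_dec a 0); auto. exfalso.
      assert (0 < a*a*s) by (apply Rmult_lt_0_compat; nra). assert (E9 : a * (a*a*s) = 0) by lra. apply Rmult_integral in E9. lra. }
    subst a. assert (s = 1) by nra. subst s. lra.
  - change (pred (pred (S (S (S m))))) with (S m) in D2.
    change (pred (S (S (S m)))) with (S (S m)) in D1, D2.
    change (a ^ (S (S m))) with (a * a ^ (S m)) in D1.
    set (P := a ^ (S m)) in *.
    assert (HK : INR (S (S (S m))) = INR m + 3) by (rewrite !S_INR; ring).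
    assert (HB : INR (S (S m)) = INR m + 2) by (rewrite !S_INR; ring).
    rewrite HB in D2. rewrite HK in D1, D2.
    assert (m0 : 0 <= INR m) by apply pos_INR.
    set (K := INR m + 3) in *. set (B := INR m + 2) in *.
    assert (Ec : c = h * K * (B * P) * (s*s*s)).
    { replace c with ((c / (s*s*s)) * (s*s*s)) by (field; lra). nra. }
    assert (E1 : h * K * (a * P) * s = c * a).
    { replace (c * a) with ((c * a / s) * s) by (field; lra). unfold Rdiv in *. nra. }
    assert (an : a <> 0).
    { intro. subst a. unfold P in Ec. rewrite pow_i in Ec by lia. nra. }
    assert (E2 : h * K * P * s = c).
    { apply (Rmult_eq_reg_r a); auto. nra. }
    assert (Bs : B * (s * s) = 1).
    { assert (h * K * P * s * (1 - B * (s*s)) = 0) by nra.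
      apply Rmult_integral in H. destruct H; lra. }
    assert (ss : s * s = 1 / B).
    { apply (Rmult_eq_reg_l B). rewrite Bs. field. all: unfold B; lra. }
    set (A := INR m + 1).
    assert (Aa : a * a = A / B).
    { simpl in Hs. replace (a * a) with (1 - s * s) by lra. rewrite ss. unfold A, B; field; lra. }
    set (u := (A/B) ^ (S m)).
    assert (Pu : P * P = u).
    { unfold P, u. rewrite <- Aa. rewrite Rpow_mult_distr. reflexivity. }
    assert (up : 0 < u) by (unfold u; apply pow_lt; unfold A, B; apply Rdiv_lt_0_compat; lra).
    set (v := (K/B) ^ (S m)).
    assert (vB : v <= B) by apply key.
    assert (cc : c * c = h * h * K * K * u / B).
    { rewrite <- E2. rewrite <- Pu.
      replace (h * K * P * s * (h * K * P * s)) with (h*h*K*K*(P*P)*(s*s)) by ring.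
      rewrite ss. field. unfold B; lra. }
    assert (Hb2 : beta < h / sqrt 2 * ((INR (S(S(S m))) - 1)/(INR (S(S(S m))) - 2)) * Rpower (1 - 1/(INR (S(S(S m))) - 1)^2) (INR (S(S(S m)))/2)) by exact Hb.
    clear Hb. rename Hb2 into Hb. rewrite HK in Hb. fold K in Hb.
    idtac.
    replace (K - 1) with B in Hb by (unfold B, K; ring).
    replace (K - 2) with A in Hb by (unfold A, K; ring).
    set (x := 1 - 1 / B ^ 2) in *.
    assert (xe : x = A * K / (B * B)) by (unfold x, A, K, B; field; lra).
    assert (xp : 0 < x) by (rewrite xe; apply Rdiv_lt_0_compat; unfold A, K, B; nra).
    set (R := Rpower x (K / 2)) in *.
    assert (Rp : 0 < R) by (unfold R, Rpower; apply exp_pos).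
    assert (RR : R * R = x ^ (S (S (S m)))).
    { unfold R. rewrite <- Rpower_plus. rewrite <- Rpower_pow by lra. f_equal.
      rewrite HK. fold K. field. }
    assert (RR2 : R * R = u * v * (A * A * K * K / (B * B * B * B))).
    { rewrite RR. change (x ^ (S (S (S m)))) with (x * (x * x ^ (S m))).
      assert (x ^ (S m) = u * v).
      { unfold u, v. rewrite <- Rpow_mult_distr. f_equal. rewrite xe. field. unfold B; lra. }
      rewrite H, xe. field. unfold A, B; lra. }
    assert (0 < A) by (unfold A; lra). assert (0 < B) by (unfold B; lra). assert (0 < K) by (unfold K; lra).
    assert (Hb' : c < h * (B / A) * R).
    { unfold c. replace (h * (B / A) * R) with (sqrt 2 * (h / sqrt 2 * (B / A) * R)) by (field; lra).
      apply Rmult_lt_compat_l; lra. }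
    assert (Hcc : c * c < (h * (B / A) * R) * (h * (B / A) * R)) by nra.
    rewrite cc in Hcc.
    replace (h * (B / A) * R * (h * (B / A) * R)) with (h * h * (B/A) * (B/A) * (R * R)) in Hcc by ring.
    rewrite RR2 in Hcc.
    assert (0 < A) by (unfold A; lra). assert (0 < B) by (unfold B; lra). assert (0 < K) by (unfold K; lra).
    assert (E : h * h * (B / A) * (B / A) * (u * v * (A * A * K * K / (B * B * B * B))) = (h*h*K*K*u/B) * (v / B)).
    { field. lra. }
    rewrite E in Hcc.
    assert (0 < h*h*K*K*u/B).
    { apply Rdiv_lt_0_compat; [|lra]. assert (0 < h*h) by nra. assert (0 < h*h*K) by nra. assert (0 < h*h*K*K) by nra. nra. }
    assert (1 < v / B) by nra.
    assert (v / B <= 1).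
    { apply (Rmult_le_reg_r B); auto. unfold Rdiv. rewrite Rmult_assoc, Rinv_l; lra. }
    lra.
Qed.
Lemma derivs : forall h k beta, 
  let c := sqrt 2 * beta in
  let D1 := fun x => h * INR k * x ^ (pred k) - c * x / sqrt (1 - x ^ 2) in
  let D2 := fun x => h * INR k * (INR (pred k) * x ^ (pred (pred k))) - c / (sqrt (1 - x ^ 2) * sqrt (1 - x ^ 2) * sqrt (1 - x ^ 2)) in
  (forall x, -1 < x < 1 -> is_derive (Bfun h k beta) x (D1 x)) /\
  (forall x, -1 < x < 1 -> is_derive D1 x (D2 x)).
Proof.
  intros h k beta c D1 D2. split; intros x Hx.
  - unfold Bfun, f_pow, D1. auto_derive. nra.
    assert (0 < sqrt (1 - x^2)) by (apply sqrt_lt_R0; nra).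
    replace (1 + - (x * (x * 1))) with (1 - x^2) by ring. unfold c. field. lra.
  - unfold D1, D2. auto_derive.
    + assert (0 < sqrt (1 - x^2)) by (apply sqrt_lt_R0; nra).
      replace (1 + - (x * (x * 1))) with (1 - x^2) by ring. repeat split; nra.
    + assert (0 < sqrt (1 - x^2)) by (apply sqrt_lt_R0; nra).
      replace (1 + - (x * (x * 1))) with (1 - x^2) by ring.
      assert (E : sqrt (1 - x^2) * sqrt (1 - x^2) = 1 - x^2) by (apply sqrt_sqrt; nra).
      set (s := sqrt (1 - x^2)) in *. assert (Hxx : x * x = 1 - s * s) by (simpl in E; lra). replace (c / (s*s*s)) with (c * (s*s + x*x) / (s*s*s)) by (rewrite Hxx; field; lra). field. lra.
Qed.

Theorem lemma7p1 (h : R) (k : nat) (beta : R) :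
  0 < h -> (1 <= k)%nat -> 0 < beta ->
  Rbar_lt (Finite beta) (beta_c k h) ->
  forall a : R, is_global_max_on_open_unit (Bfun h k beta) a ->
  Derive (Derive (Bfun h k beta)) a < 0.
Proof.
  intros hp kp bp Hb a [Ha Hm].
  destruct (derivs h k beta) as [HD1 HD2].
  set (c := sqrt 2 * beta) in *.
  set (D1 := fun x => h * INR k * x ^ (pred k) - c * x / sqrt (1 - x ^ 2)) in *.
  set (D2 := fun x => h * INR k * (INR (pred k) * x ^ (pred (pred k))) - c / (sqrt (1 - x ^ 2) * sqrt (1 - x ^ 2) * sqrt (1 - x ^ 2))) in *.
  assert (E : Derive (Derive (Bfun h k beta)) a = D2 a).
  { rewrite (Derive_ext_loc _ D1).
    - apply is_derive_unique, HD2, Ha.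
    - apply (filter_imp (fun t => -1 < t /\ t < 1)).
      + intros t Ht. apply is_derive_unique, HD1, Ht.
      + apply (open_and _ _ (open_gt (-1)) (open_lt 1)). exact Ha. }
  rewrite E.
  assert (Z : D1 a = 0) by (apply (first_order (Bfun h k beta)); auto).
  assert (Le : D2 a <= 0).
  { destruct (Rle_lt_dec (D2 a) 0) as [?|Hlt]; auto. exfalso.
    apply (second_order (Bfun h k beta) D1 a (D2 a)); auto. }
  destruct Le as [?|Heq]; auto. exfalso.
  assert (sp : 0 < sqrt (1 - a^2)) by (apply sqrt_lt_R0; nra).
  apply (alg h k beta a (sqrt (1 - a^2))); auto.
  apply sqrt_sqrt; nra.
Qed.
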